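(* Let $\mathcal{X}\subset\mathbb{R}^d$ be a compact metric space, $\mathcal{Y}\subset\mathbb{R}$, and let $(X,Y)$ be distributed according to a probability measure $\rho$ on $\mathcal{X}\times\mathcal{Y}$ with marginal $\rho_{\mathcal{X}}$. Let $f^\star(x)=\mathbb{E}(Y\mid X=x)$ be bounded, let $\mathcal{H}\subset C(\mathcal{X})$ be uniformly bounded, and set $M=\max\{\|f^\star\|_\infty,\sup_{f\in\mathcal{H}}\|f\|_\infty\}$. Assume there is $\epsilon>0$ with $\mathbb{E}|Y|^{1+\epsilon}<+\infty$, and let $\sigma>\max\{2M,1\}$. Then there exist positive constants $c_1,c_2$, independent of $\sigma$ and of $f$, such that for every measurable $f:\mathcal{X}\to\mathbb{R}$ with $\|f\|_\infty\le M$, the random variable $\xi(x,y)=\ell_\sigma(y-f(x))-\ell_\sigma(y-f^\star(x))$ satisfies \[ \mathbb{E}\xi^2\le c_1\|f-f^\star\|_{2,\rho}^{\frac{2(\epsilon-1)_+}{\epsilon+1}}+c_2\sigma^{1-\epsilon}. \]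
   Context: The Huber loss with scale parameter $\sigma>0$ is $\ell_\sigma(t)=t^2$ if $|t|\le\sigma$ and $\ell_\sigma(t)=2\sigma|t|-\sigma^2$ otherwise. $\|g\|_{2,\rho}$ is the $L^2(\rho_{\mathcal{X}})$ norm. For $t\in\mathbb{R}$, $t_+=\max(0,t)$. The expectation is over $(X,Y)\sim\rho$. *)

(* Defs.v *)
From HB Require Import structures.
From mathcomp Require Import all_boot all_order all_algebra.
From mathcomp Require Import all_classical all_reals all_analysis.
Set Implicit Arguments. Unset Strict Implicit. Unset Printing Implicit Defensive.
Import Order.TTheory GRing.Theory Num.Theory.
Import numFieldNormedType.Exports.
Local Open Scope classical_set_scope.
Local Open Scope ring_scope.

Definition Rd (R : realType) (d : nat) : measurableType _ :=
  g_sigma_algebraType (@open 'rV[R]_d).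

(* The sample space X x Y is (a subset of) R^d x R. *)
Definition RdR (R : realType) (d : nat) := (Rd R d * R)%type.

Definition marginal (R : realType) (d : nat)
  (rho : probability (RdR R d) R) : set (Rd R d) -> \bar R :=
  pushforward rho fst.

Section marginal_measure.
Context (R : realType) (d : nat) (rho : probability (RdR R d) R).
Local Open Scope ereal_scope.

Let marginal0 : marginal rho set0 = 0.
Proof. by rewrite /marginal /pushforward preimage_set0 measure0. Qed.

Let marginal_ge0 A : 0 <= marginal rho A.
Proof. exact: measure_ge0. Qed.

Let marginal_sigma_additive : semi_sigma_additive (marginal rho).
Proof.
move=> F mF tF mUF; rewrite /marginal /pushforward preimage_bigcup.
apply: measure_semi_sigma_additive.
- by move=> n; rewrite -[X in measurable X]setTI; exact: measurable_fst.
- apply/trivIsetP => /= i j _ _ ij; rewrite -preimage_setI.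
  by move/trivIsetP : tF => /(_ _ _ _ _ ij) ->//; rewrite preimage_set0.
- by rewrite -preimage_bigcup -[X in measurable X]setTI; exact: measurable_fst.
Qed.

HB.instance Definition _ := isMeasure.Build _ _ _
  (marginal rho) marginal0 marginal_ge0 marginal_sigma_additive.
End marginal_measure.

Definition huber (R : realType) (sigma t : R) : R :=
  if `|t| <= sigma then t ^+ 2 else 2 * sigma * `|t| - sigma ^+ 2.

(* fs is (a version of) the conditional expectation E(Y | X = x) on K:
   measurable on K, and E[Y 1_{X in A}] = E[fs(X) 1_{X in A}] for every
   measurable A included in K. *)
Definition is_cond_exp (R : realType) (d : nat)
  (rho : probability (RdR R d) R) (K : set 'rV[R]_d) (fs : 'rV[R]_d -> R) :=
  measurable_fun (K : set (Rd R d)) fs /\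
  (forall A : set (Rd R d), measurable A -> A `<=` K ->
    (\int[rho]_(p in A `*` [set: R]) (p.2)%:E
     = \int[rho]_(p in A `*` [set: R]) (fs p.1)%:E)%E).

Definition supnorm (R : realType) (d : nat) (K : set 'rV[R]_d)
  (g : 'rV[R]_d -> R) : R := sup [set `|g x| | x in K].

(* Main.v *)
Require Import Defs.
From HB Require Import structures.
From mathcomp Require Import all_boot all_order all_algebra.
From mathcomp Require Import all_classical all_reals all_analysis.
From mathcomp Require Import lra ring measurable_realfun.
Import Order.TTheory GRing.Theory Num.Theory.
Import numFieldNormedType.Exports.
Local Open Scope classical_set_scope.
Local Open Scope ring_scope.

Lemma sq_le {R : realDomainType} {x y : R} : 0 <= x -> x <= y -> x ^+ 2 <= y ^+ 2.
Proof. move=> x0 xy; rewrite !expr2; apply: ler_pM => //. Qed.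

Lemma huber_abs (R : realType) (s t : R) :
  huber s t = if `|t| <= s then `|t| ^+ 2 else 2 * s * `|t| - s ^+ 2.
Proof. by rewrite /huber real_normK ?num_real. Qed.

Definition mn {R : realType} (x y : R) := if x <= y then x else y.
Definition mx {R : realType} (x y : R) := if x <= y then y else x.

Definition hh {R : realType} (s x : R) := if x <= s then x ^+ 2 else 2 * s * x - s ^+ 2.

Lemma hh_diff {R : realType} {s u v : R} : 0 < s -> 0 <= u -> u <= v ->
  0 <= hh s v - hh s u <= 2 * (v - u) * mn v s.
Proof.
move=> s0 u0 uv; rewrite /hh.
have v0 : 0 <= v by apply: le_trans uv.
case: (leP u s) => us; case: (leP v s) => vs.
- rewrite /mn vs; apply/andP; split; nra.
- rewrite /mn ifN; last by rewrite -ltNge. apply/andP; split; nra.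
- lra.
- rewrite /mn ifN; last by rewrite -ltNge. apply/andP; split; nra.
Qed.

Lemma huber_diff (R : realType) (s t1 t2 : R) : 0 < s ->
  (huber s t1 - huber s t2) ^+ 2 <=
  4 * (t1 - t2) ^+ 2 * (mn (mx `|t1| `|t2|) s) ^+ 2.
Proof.
move=> s0; rewrite !huber_abs -!/(hh s _).
have key : forall u v : R, 0 <= u -> 0 <= v ->
  (hh s u - hh s v) ^+ 2 <= 4 * (u - v) ^+ 2 * (mn (mx u v) s) ^+ 2.
  move=> u v u0 v0.
  wlog uv : u v u0 v0 / u <= v.
    move=> W; case: (leP u v) => [uv|vu]; first exact: W.
    have := W v u v0 u0 (ltW vu); rewrite /mx (ltW vu) ifN; last by rewrite -ltNge.
    by rewrite -(sqrrN (hh s u - hh s v)) opprB -(sqrrN (u - v)) opprB.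
  have := hh_diff (R:=R) (s:=s) s0 u0 uv; move=> /andP[h1 h2].
  rewrite /mx uv -(sqrrN (hh s u - hh s v)) opprB -(sqrrN (u - v)) opprB.
  have m0 : 0 <= mn v s by rewrite /mn; case: ifP => // _; exact: ltW.
  have HH := sq_le h1 h2. apply: (le_trans HH).
  rewrite !exprMn; have -> : (2:R) ^+ 2 = 4 by rewrite expr2; lra.
  by rewrite mulrA.
have := key _ _ (normr_ge0 t1) (normr_ge0 t2) => /= H.
apply: (le_trans H).
rewrite -(mulrA 4 ((`|t1| - `|t2|)^+2)) -(mulrA 4 ((t1-t2)^+2)).
apply: ler_wpM2l => //; apply: ler_wpM2r; first exact: sqr_ge0.
have := sq_le (normr_ge0 _) (ler_dist_dist t1 t2).
by rewrite !real_normK ?num_real.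
Qed.

Lemma pw_case1 {R : realType} {s eps m a : R} : 0 < s -> 0 < eps -> eps <= 1 ->
  0 <= m -> m <= a -> m <= s -> m ^+ 2 <= s `^ (1 - eps) * a `^ (1 + eps).
Proof.
move=> s0 e0 e1 m0 ma ms.
have a0 : 0 <= a by apply: le_trans ma.
have -> : m ^+ 2 = m `^ (1 + eps) * m `^ (1 - eps).
  rewrite -powRD; last by apply/implyP => /eqP; lra.
  by rewrite -powR_mulrn //; congr (_ `^ _); lra.
rewrite mulrC; apply: ler_pM; [exact: powR_ge0|exact: powR_ge0| |].
- by apply: ge0_ler_powR => //; rewrite ?nnegrE //; lra.
- by apply: ge0_ler_powR => //; rewrite ?nnegrE //; lra.
Qed.

Lemma pw_case2 {R : realType} {T eps m a : R} : 0 < T -> 1 <= eps ->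
  0 <= m -> m <= a -> m ^+ 2 <= T ^+ 2 + T `^ (1 - eps) * a `^ (1 + eps).
Proof.
move=> T0 e1 m0 ma.
have a0 : 0 <= a by apply: le_trans ma.
have m2a : m ^+ 2 <= a ^+ 2 by apply: sq_le.
have Hp : 0 <= T `^ (1 - eps) * a `^ (1 + eps) by apply: mulr_ge0; apply: powR_ge0.
case: (leP a T) => aT.
  have : a ^+ 2 <= T ^+ 2 by apply: sq_le => //; exact: ltW.
  move=> h; rewrite -[m ^+ 2]addr0; apply: lerD => //; exact: le_trans h.
have a0' : 0 < a by apply: lt_trans aT.
suff h : a ^+ 2 <= T `^ (1 - eps) * a `^ (1 + eps).
  rewrite -[m ^+ 2]add0r; apply: lerD; [exact: sqr_ge0|exact: le_trans h].
have -> : a ^+ 2 = a `^ (1 + eps) * a `^ (1 - eps).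
  rewrite -powRD; last by apply/implyP => /eqP; lra.
  by rewrite -powR_mulrn //; congr (_ `^ _); lra.
rewrite [X in _ <= X]mulrC; apply: ler_wpM2l; first exact: powR_ge0.
have -> : 1 - eps = - (eps - 1) by lra.
rewrite !powRN; rewrite lef_pV2 ?posrE ?powR_gt0 //.
by apply: ge0_ler_powR => //; rewrite ?nnegrE; lra.
Qed.

Lemma apow_bound {R : realType} {y M q : R} : 0 <= M -> 0 < q ->
  (`|y| + M) `^ q <= 2 `^ q * (`|y| `^ q + M `^ q).
Proof.
move=> M0 q0.
pose z := mx `|y| M.
have z0 : 0 <= z by rewrite /z /mx; case: ifP.
have az : `|y| + M <= 2 * z.
  rewrite /z /mx; case: ifP => h; lra.
apply: (le_trans (y := (2 * z) `^ q)).
  by apply: ge0_ler_powR; rewrite ?nnegrE //; try exact: ltW; rewrite ?mulr_ge0 ?addr_ge0.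
rewrite powRM //; apply: ler_wpM2l; first exact: powR_ge0.
rewrite /z /mx; case: ifP => _.
  by rewrite lerDr powR_ge0.
by rewrite lerDl powR_ge0.
Qed.

Lemma mn_lel {R : realType} (x y : R) : mn x y <= x.
Proof. by rewrite /mn; case: ifP => // /negbT; rewrite -ltNge => /ltW. Qed.
Lemma mn_ler {R : realType} (x y : R) : mn x y <= y.
Proof. by rewrite /mn; case: ifP => // /negbT; rewrite -ltNge => /ltW. Qed.
Lemma mn_ge0 {R : realType} (x y : R) : 0 <= x -> 0 <= y -> 0 <= mn x y.
Proof. by rewrite /mn; case: ifP. Qed.
Lemma mx_le {R : realType} (x y c : R) : x <= c -> y <= c -> mx x y <= c.
Proof. by rewrite /mx; case: ifP. Qed.
Lemma mx_ge0 {R : realType} (x y : R) : 0 <= x -> 0 <= y -> 0 <= mx x y.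
Proof. by rewrite /mx; case: ifP. Qed.

Lemma pw_main {R : realType} {M s eps A B fx fsx y : R} : 0 < s -> 0 < eps -> 0 <= B ->
  `|fx| <= M -> `|fsx| <= M ->
  (forall m a, 0 <= m -> m <= a -> m <= s -> m ^+ 2 <= A + B * a `^ (1 + eps)) ->
  (huber s (y - fx) - huber s (y - fsx)) ^+ 2 <=
  4 * A * (fx - fsx) ^+ 2 +
  B * (16 * M ^+ 2 * 2 `^ (1 + eps) * (`|y| `^ (1 + eps) + M `^ (1 + eps))).
Proof.
move=> s0 e0 B0 hf hfs Hm.
have M0 : 0 <= M by apply: le_trans hf.
apply: le_trans; first exact: huber_diff.
set m := mn _ s.
have Ht : forall t, `|t| <= M -> `|y - t| <= `|y| + M.
  move=> t ht; apply: (le_trans (ler_normB _ _)); exact: lerD.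
have m0 : 0 <= m by apply: mn_ge0; [apply: mx_ge0|exact: ltW].
have ma : m <= `|y| + M.
  by apply: (le_trans (mn_lel _ _)); apply: mx_le; apply: Ht.
have ms : m <= s by exact: mn_ler.
have := Hm m _ m0 ma ms => hm.
have -> : (y - fx - (y - fsx)) ^+ 2 = (fx - fsx) ^+ 2.
  by rewrite -sqrrN; congr (_ ^+ 2); lra.
have g0 : 0 <= (fx - fsx) ^+ 2 by exact: sqr_ge0.
have g4 : (fx - fsx) ^+ 2 <= 4 * M ^+ 2.
  have : `|fx - fsx| <= 2 * M by apply: (le_trans (ler_normB _ _)); lra.
  move=> /(sq_le (normr_ge0 _)); rewrite real_normK ?num_real //.
  by rewrite exprMn; have -> : (2:R) ^+ 2 = 4 by rewrite expr2; lra.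
have hq := apow_bound (y := y) M0 (ltr_pwDl ltr01 (ltW e0)).
move: g0 g4 hq hm.
set g := (fx - fsx) ^+ 2; set P := (`|y| + M) `^ (1 + eps).
set C := 2 `^ (1 + eps); set Q := (`|y| `^ (1 + eps) + M `^ (1 + eps)).
move=> g0 g4 hq hm.
have P0 : 0 <= P by exact: powR_ge0.
have M2 : 0 <= M ^+ 2 by exact: sqr_ge0.
apply: (le_trans (y := 4 * g * (A + B * P))).
  by apply: ler_wpM2l => //; apply: mulr_ge0.
have -> : 4 * g * (A + B * P) = 4 * A * g + B * (4 * g * P) by ring.
apply: lerD => //; apply: ler_wpM2l => //.
have h1 : 0 <= (4 * M ^+ 2 - g) * P by apply: mulr_ge0 => //; rewrite subr_ge0.
have h2 : 0 <= (C * Q - P) * M ^+ 2 by apply: mulr_ge0 => //; rewrite subr_ge0.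
nra.
Qed.

Section IntLemmas.
Import HBNNSimple.
Lemma le_int_any d (T : measurableType d) (R : realType)
  (mu : {measure set T -> \bar R}) (F G : T -> \bar R) :
  (forall x, (0 <= F x)%E) -> (forall x, (F x <= G x)%E) ->
  (\int[mu]_x F x <= \int[mu]_x G x)%E.
Proof.
move=> F0 FG.
have G0 x : (0 <= G x)%E by apply: le_trans (FG x).
rewrite !ge0_integralTE //; apply: ereal_sup_le => _ [h /= hF <-].
by exists h => //= x; apply: le_trans (FG x).
Qed.

Lemma le_int_ae d (T : measurableType d) (R : realType)
  (mu : {measure set T -> \bar R}) (F G : T -> \bar R) (N : set T) :
  measurable N -> mu N = 0%E -> measurable_fun [set: T] G -> (forall x, (0 <= G x)%E) ->
  (forall x, (0 <= F x)%E) -> (forall x, ~ N x -> (F x <= G x)%E) ->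
  (\int[mu]_x F x <= \int[mu]_x G x)%E.
Proof.
move=> mN N0 mG G0 F0 FG.
rewrite ge0_integralTE //; apply: ge_ereal_sup => _ [h /= hF <-].
rewrite -integralT_nnsfun.
have mh : measurable_fun setT (fun x => (h x)%:E).
  by apply/measurable_EFinP; exact: measurable_funP.
rewrite (@ge0_negligible_integral _ _ _ mu setT N _ mN measurableT) //; last by move=> x _; rewrite lee_fin.
apply: (le_trans (y := (\int[mu]_(x in setT `\` N) G x)%E)).
  apply: ge0_le_integral => //.
  - exact: measurableD.
  - by move=> x _; rewrite lee_fin.
  - exact: measurable_funS mh.
  - exact: measurable_funS mG.
  - by move=> x [_ Nx]; apply: le_trans (hF x) (FG x Nx).
apply: ge0_subset_integral => //; exact: measurableD.
Qed.

End IntLemmas.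

Theorem theorem2 (R : realType) (d : nat)
  (K : set 'rV[R]_d) (Ys : set R)
  (rho : probability (RdR R d) R)
  (fs : 'rV[R]_d -> R) (H : set ('rV[R]_d -> R)) (M eps : R) :
  compact K ->
  rho.-negligible (~` (K `*` Ys)) ->
  is_cond_exp rho K fs ->
  (exists B : R, forall x, K x -> `|fs x| <= B) ->
  (forall h, H h -> {within K, continuous h}) ->
  (exists B : R, forall h x, H h -> K x -> `|h x| <= B) ->
  M = Num.max (supnorm K fs) (sup [set supnorm K h | h in H]) ->
  0 < eps ->
  (\int[rho]_p ((`|p.2| `^ (1 + eps))%R)%:E < +oo)%E ->
  exists c1 c2 : R, 0 < c1 /\ 0 < c2 /\
    forall (sigma : R) (f : 'rV[R]_d -> R),
      Num.max (2 * M) 1 < sigma ->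
      measurable_fun (K : set (Rd R d)) f ->
      (forall x, K x -> `|f x| <= M) ->
      (\int[rho]_p (((huber sigma (p.2 - f p.1)
                       - huber sigma (p.2 - fs p.1)) ^+ 2)%R)%:E
       <= (c1 * (fine (Lnorm (marginal rho) 2%:E (fun x => (f x - fs x)%:E)))
               `^ (2 * Num.max (eps - 1) 0 / (eps + 1))
           + c2 * sigma `^ (1 - eps))%:E)%E.
Proof.
move=> cK [N [mN N0 KN]] [mfs _] [Bfs hBfs] _ _ HM e0 HY.
have hfs : forall x, K x -> `|fs x| <= M.
  move=> x Kx; rewrite HM le_max; apply/orP; left.
  apply: ub_le_sup; last by exists x.
  by exists Bfs => _ [y Ky <-]; exact: hBfs.
have mK : measurable (K : set (Rd R d)).
  rewrite -[K]setCK; apply: measurableC; apply: sub_sigma_algebra.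
  by rewrite openC; apply: compact_closed => //; exact: norm_hausdorff.
have notN : forall p : RdR R d, ~ N p -> K p.1.
  by move=> p Np; apply: contrapT => Kp; apply: Np; apply: KN => -[].
pose q := 1 + eps.
have q0 : 0 < q by rewrite /q; lra.
set EYe := (\int[rho]_p _)%E in HY.
have EY0 : (0 <= EYe)%E by apply: integral_ge0 => p _; rewrite lee_fin powR_ge0.
pose EY := fine EYe.
have EYE : EYe = EY%:E by rewrite /EY fineK // ge0_fin_numE.
pose CQ := 16 * M ^+ 2 * 2 `^ q * (EY + M `^ q).
have CQ0 : 0 <= CQ.
  rewrite /CQ; apply: mulr_ge0; [apply: mulr_ge0; [apply: mulr_ge0 => //; exact: sqr_ge0|exact: powR_ge0]|].
  by apply: addr_ge0; [rewrite /EY fine_ge0|exact: powR_ge0].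
exists (4 + CQ), (CQ + 1); split; first lra.
split; first lra.
move=> sigma f hs mf hf.
move: hs; rewrite gt_max => /andP[h2M h1s].
have s0 : 0 < sigma by lra.
pose fK := f \_ (K : set (Rd R d)); pose fsK := fs \_ (K : set (Rd R d)).
have mfK : measurable_fun [set: Rd R d] fK by apply/(measurable_restrictT _ _).1.
have mfsK : measurable_fun [set: Rd R d] fsK by apply/(measurable_restrictT _ _).1.
pose g x := (fK x - fsK x) ^+ 2.
have mg : measurable_fun [set: Rd R d] g.
  by apply: measurable_funX; apply: measurable_funB.
have g0 x : 0 <= g x by exact: sqr_ge0.
have gK x : K x -> g x = (f x - fs x) ^+ 2.
  by move=> Kx; rewrite /g /fK /fsK !patchE mem_set.
have mfst : measurable_fun [set: RdR R d] (@fst (Rd R d) R) by exact: measurable_fst.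
have margT : marginal rho [set: Rd R d] = 1%E.
  by rewrite /marginal /pushforward preimage_setT probability_setT.
have margKC : marginal rho (~` (K : set (Rd R d))) = 0%E.
  rewrite /marginal /pushforward.
  apply: (subset_measure0 _ mN) => //.
    by rewrite -[X in measurable X]setTI; apply: mfst => //; exact: measurableC.
  by move=> p /= Kp; apply: KN => -[].
have pe x : (`|(f x - fs x)%:E| `^ 2 = ((f x - fs x) ^+ 2)%:E)%E.
  by rewrite abse_EFin poweR_EFin powR_mulrn ?normr_ge0 // real_normK ?num_real.
pose Ie := (\int[marginal rho]_x (`|(f x - fs x)%:E| `^ 2))%E.
have Ie0 : (0 <= Ie)%E by apply: integral_ge0 => x _; exact: poweR_ge0.
have Iub : (Ie <= (4 * M ^+ 2)%:E)%E.
  apply: (le_trans (y := (\int[marginal rho]_x (cst (4 * M ^+ 2)%:E x))%E)).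
    apply: (@le_int_ae _ _ _ (marginal rho) _ _ (~` (K : set (Rd R d)))) => //.
    - exact: measurableC.
    - by move=> x; rewrite lee_fin; apply: mulr_ge0 => //; exact: sqr_ge0.
    - by move=> x; exact: poweR_ge0.
    - move=> x /contrapT Kx; rewrite pe lee_fin /=.
      have : `|f x - fs x| <= 2 * M.
        apply: (le_trans (ler_normB _ _)); have := hf x Kx; have := hfs x Kx; lra.
      move=> /(sq_le (normr_ge0 _)); rewrite real_normK ?num_real //.
      by rewrite exprMn; have -> : (2:R) ^+ 2 = 4 by rewrite expr2; lra.
  by rewrite integral_cst // -[X in (_ <= X)%E]mule1 -margT.
have Ilb : (\int[marginal rho]_x (g x)%:E <= Ie)%E.
  apply: le_int_any => x; first by rewrite lee_fin.
  have [Kx|nKx] := pselect (K x); first by rewrite pe gK.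
  have -> : g x = 0 by rewrite /g /fK /fsK !patchE memNset // subrr expr2 mulr0.
  exact: poweR_ge0.
have Ifin : Ie \is a fin_num by rewrite ge0_fin_numE // (le_lt_trans Iub) // ltry.
pose J := fine Ie.
have IeJ : Ie = J%:E by rewrite /J fineK.
have J0 : 0 <= J by rewrite /J fine_ge0.
have hL : fine (Lnorm (marginal rho) 2%:E (fun x => (f x - fs x)%:E)) = J `^ 2^-1.
  by rewrite unlock /= -/Ie IeJ poweR_EFin.
rewrite hL.
have Eg : (\int[rho]_p (g p.1)%:E <= J%:E)%E.
  have mgE : measurable_fun [set: Rd R d] (fun x => (g x)%:E) by exact/measurable_EFinP.
  have := @ge0_integral_pushforward _ _ _ _ R fst mfst rho setT (fun x => (g x)%:E)
    measurableT mgE (fun x _ => g0 x).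
  rewrite preimage_setT => <-; rewrite -IeJ; exact: Ilb.
pose c := 16 * M ^+ 2 * 2 `^ q.
have c0 : 0 <= c by apply: mulr_ge0; [apply: mulr_ge0 => //; exact: sqr_ge0|exact: powR_ge0].
have mY : measurable_fun [set: RdR R d] (fun p : RdR R d => `|p.2| `^ q).
  have h1 : measurable_fun [set: RdR R d] (fun p : RdR R d => `|p.2|).
    apply: measurableT_comp => //; exact: normr_measurable.
  apply: (@measurableT_comp _ _ _ _ _ _ (fun x : R => x `^ q) _ (fun p : RdR R d => `|p.2|)) => //; exact: measurable_powR.
have mg1 : measurable_fun [set: RdR R d] (fun p : RdR R d => g p.1).
  by apply: measurableT_comp => //.
have main : forall A B : R, 0 <= A -> 0 <= B ->
    (forall m a : R, 0 <= m -> m <= a -> m <= sigma -> m ^+ 2 <= A + B * a `^ q) ->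
    (\int[rho]_p (((huber sigma (p.2 - f p.1)
                       - huber sigma (p.2 - fs p.1)) ^+ 2)%R)%:E
     <= (4 * A * J + B * CQ)%:E)%E.
  move=> A B A0 B0 Hm.
  pose Gf (p : RdR R d) := 4 * A * g p.1 + (B * c * `|p.2| `^ q + B * c * M `^ q).
  have mGf : measurable_fun [set: RdR R d] Gf.
    apply: measurable_funD; first by apply: measurable_funM => //; exact: measurable_cst.
    apply: measurable_funD; last exact: measurable_cst.
    by apply: measurable_funM => //; exact: measurable_cst.
  have Gf0 p : 0 <= Gf p.
    apply: addr_ge0; first by apply: mulr_ge0 => //; apply: mulr_ge0.
    apply: addr_ge0; apply: mulr_ge0; rewrite ?powR_ge0 //; exact: mulr_ge0.
  apply: (le_trans (y := (\int[rho]_p (Gf p)%:E)%E)).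
    apply: (@le_int_ae _ _ _ rho _ _ N) => //.
    - exact/measurable_EFinP.
    - by move=> p; rewrite lee_fin; exact: sqr_ge0.
    - move=> p /notN Kp; rewrite lee_fin /Gf gK //.
      have := pw_main (y := p.2) s0 e0 B0 (hf _ Kp) (hfs _ Kp) Hm.
      by rewrite /c -/q; lra.
  have mg1E : measurable_fun [set: RdR R d] (fun p : RdR R d => (g p.1)%:E).
    exact/measurable_EFinP.
  have mYE : measurable_fun [set: RdR R d] (fun p : RdR R d => (`|p.2| `^ q)%:E).
    exact/measurable_EFinP.
  rewrite (eq_integral (fun p : RdR R d => ((4 * A)%:E * (g p.1)%:E +
      ((B * c)%:E * (`|p.2| `^ q)%:E + cst (B * c * M `^ q)%:E p))%E)); last first.
    by move=> p _; rewrite /Gf /cst /= -EFinM -EFinM !EFinD.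
  rewrite ge0_integralD //; last 4 first.
  - by move=> p _; rewrite /= -EFinM lee_fin; apply: mulr_ge0 => //; apply: mulr_ge0.
  - exact: measurable_funeM.
  - move=> p _; rewrite /= -EFinM -EFinD lee_fin; apply: addr_ge0; apply: mulr_ge0;
      rewrite ?powR_ge0 //; exact: mulr_ge0.
  - apply: emeasurable_funD; last exact: measurable_cst.
    exact: measurable_funeM.
  rewrite ge0_integralD //; last 3 first.
  - by move=> p _; rewrite -EFinM lee_fin; apply: mulr_ge0; rewrite ?powR_ge0 //; exact: mulr_ge0.
  - exact: measurable_funeM.
  - by move=> p _; rewrite lee_fin; apply: mulr_ge0; rewrite ?powR_ge0 //; exact: mulr_ge0.
  rewrite ge0_integralZl_EFin //; last 2 first.
    by move=> p _; rewrite lee_fin.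
    by apply: mulr_ge0.
  rewrite ge0_integralZl_EFin //; try (by move=> p _; rewrite lee_fin powR_ge0);
    try (by apply: mulr_ge0).
  rewrite integral_cst // [X in ((B * c * M `^ q)%:E * X)%E](_ : _ = 1%E); last exact: probability_setT.
  rewrite mule1.
  rewrite (_ : (\int[rho]_p (`|p.2| `^ q)%:E)%E = EY%:E); last exact: EYE.
  apply: (le_trans (y := ((4 * A)%:E * J%:E + ((B * c)%:E * EY%:E + (B * c * M `^ q)%:E))%E)).
    apply: leeD => //; apply: lee_pmul => //; rewrite ?lee_fin //; first by apply: mulr_ge0.
    by apply: integral_ge0 => p _; rewrite lee_fin.
  rewrite -!EFinM -!EFinD lee_fin /CQ -/c le_eqVlt; apply/orP; left; apply/eqP; ring.
pose S := sigma `^ (1 - eps).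
have S0 : 0 <= S by exact: powR_ge0.
have e1p : eps + 1 != 0 by apply/eqP; lra.
have [e1|e1] := leP eps 1.
  have := main 0 S (lexx _) S0.
  have Hm : forall m a : R, 0 <= m -> m <= a -> m <= sigma -> m ^+ 2 <= 0 + S * a `^ q.
    by move=> m a m0 ma ms; rewrite add0r; exact: pw_case1.
  move=> /(_ Hm) h; apply: (le_trans h); rewrite lee_fin.
  rewrite (max_r (_ : eps - 1 <= 0)); last lra.
  have -> : 2 * 0 / (eps + 1) = 0 :> R by rewrite mulr0 mul0r.
  rewrite powRr0 mulr1 mulr0 mul0r add0r -/S.
  have : 0 <= CQ * S by apply: mulr_ge0.
  lra.
have [J00|J0'] := eqVneq J 0.
  have := main (sigma ^+ 2) S (sqr_ge0 _) S0.
  have Hm : forall m a : R, 0 <= m -> m <= a -> m <= sigma -> m ^+ 2 <= sigma ^+ 2 + S * a `^ q.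
    by move=> m a m0 ma ms; apply: pw_case2 => //; lra.
  move=> /(_ Hm) h; apply: (le_trans h); rewrite lee_fin J00 mulr0 add0r -/S.
  have : 0 <= (4 + CQ) * (0 `^ 2^-1) `^ (2 * Num.max (eps - 1) 0 / (eps + 1)).
    by apply: mulr_ge0; [lra|exact: powR_ge0].
  have : S * CQ <= (CQ + 1) * S by nra.
  lra.
have Jp : 0 < J by rewrite lt_def J0' J0.
pose T := J `^ (- (eps + 1)^-1).
have T0 : 0 < T by exact: powR_gt0.
pose Phi := J `^ ((eps - 1) / (eps + 1)).
have h1 : T `^ (1 - eps) = Phi.
  by rewrite /T -powRrM /Phi; congr (_ `^ _); field.
have h2 : T ^+ 2 * J = Phi.
  rewrite -powR_mulrn; last exact: ltW.
  rewrite /T -powRrM -[X in _ * X](powRr1 J0) -powRD; last first.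
    by apply/implyP => _.
  by rewrite /Phi; congr (_ `^ _); field.
have h3 : (J `^ 2^-1) `^ (2 * Num.max (eps - 1) 0 / (eps + 1)) = Phi.
  rewrite (max_l (_ : 0 <= eps - 1)); last lra.
  by rewrite -powRrM /Phi; congr (_ `^ _); field.
have := main (T ^+ 2) (T `^ (1 - eps)) (sqr_ge0 _) (powR_ge0 _ _).
have Hm : forall m a : R, 0 <= m -> m <= a -> m <= sigma ->
    m ^+ 2 <= T ^+ 2 + T `^ (1 - eps) * a `^ q.
  by move=> m a m0 ma ms; apply: pw_case2 => //; lra.
move=> /(_ Hm) h; apply: (le_trans h); rewrite lee_fin h3 h1.
have -> : 4 * T ^+ 2 * J = 4 * Phi by rewrite -h2 mulrA.
have : 0 <= (CQ + 1) * S by apply: mulr_ge0 => //; lra.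
rewrite -/S; nra.
Qed.
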